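(* Let $G$ be a minimal BTB graph and $1\le r<d\le |W|-|B|-1$. Then every TCD map $T$ on $G$ of rank $r$ into $\mathbb{CP}^r$ is, up to a projective transformation of $\mathbb{CP}^r$, the central projection $\pi_U\circ\hat T$ of a TCD map $\hat T$ on $G$ of rank $d$ into $\mathbb{CP}^d$, from some $\hat T$-admissible subspace $U\subset\mathbb{CP}^d$ of dimension $d-r-1$.
   Context: A BTB graph is a finite planar bipartite graph (black $B$, white $W$) in a closed disk or cactus, with boundary white vertices on the boundary and every black vertex of degree $3$. It is minimal if zig-zag paths (turning maximally left at white and right at black vertices) are never closed, never traverse an edge twice, and no two both traverse two distinct edges $e_1$ then $e_2$. A TCD map is $T:W\to\mathbb{CP}^d$ such that for each black vertex $b$ the images of its three white neighbours are pairwise distinct and lie on a line $L_b$. Its rank is the dimension of the span of its image. For a projective subspace $U\subset\mathbb{CP}^d$ of dimension $d-r-1$ and a complementary subspace $V$ of dimension $r$, the central projection $\pi_U:\mathbb{CP}^d\dashrightarrow V\cong\mathbb{CP}^r$ sends $P\notin U$ to $V\cap\mathrm{span}(U,P)$. $U$ is $\hat T$-admissible if no $\hat T(w)$ lies in $U$ and $U\cap L_b=\emptyset$ for every black vertex $b$; then $\pi_U\circ\hat T$ is a TCD map. *)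

(* Defs.v *)
From HB Require Import structures.
From mathcomp Require Import all_boot all_order all_algebra all_fingroup.
From mathcomp Require Import complex.
From mathcomp Require Import reals Rstruct.
Set Implicit Arguments. Unset Strict Implicit. Unset Printing Implicit Defensive.
Import Order.TTheory GRing.Theory Num.Theory.
Local Open Scope ring_scope.

Definition C : numClosedFieldType := (Rdefinitions.R)[i].

(* W, B : white / black vertices; E : edges, edge e joins white vertex      *)
(* wv e to black vertex bv e.  The embedding is encoded as a rotation       *)
(* system (combinatorial map) on the sphere of the graph G' obtained from G *)
(* by adding one extra vertex "infinity" (the complement of the disk /      *)
(* cactus) and one "leg" l : L from the white boundary vertex lw l to       *)
(* infinity for every boundary corner (one per boundary vertex for a disk,  *)
(* possibly several at the pinch points of a cactus).                       *)
(* Darts: inl (e, true) = white end of e, inl (e, false) = black end of e,  *)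
(*        inr (l, true) = white end of leg l, inr (l, false) = end at oo.    *)
(* sigma is the (counterclockwise) rotation of darts around their vertex;   *)

Definition dart (E L : finType) := ((E * bool) + (L * bool))%type.

Definition dvert (W B E L : finType) (wv : E -> W) (bv : E -> B) (lw : L -> W)
  (d : dart E L) : (W + B) + unit :=
  match d with
  | inl (e, true) => inl (inl (wv e))
  | inl (e, false) => inl (inr (bv e))
  | inr (l, true) => inl (inl (lw l))
  | inr (l, false) => inr tt
  end.

Definition dflip (E L : finType) (d : dart E L) : dart E L :=
  match d with
  | inl (e, b) => inl (e, ~~ b)
  | inr (l, b) => inr (l, ~~ b)
  end.

(* Faces of the map are the orbits of sigma o flip; components are the     *)
(* classes of the equivalence generated by sigma and flip.                  *)
Definition dface (E L : finType) (sigma : {perm dart E L}) (d : dart E L) :=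
  sigma (dflip d).

Definition dadj (E L : finType) (sigma : {perm dart E L}) : rel (dart E L) :=
  fun x y => (y == sigma x) || (y == dflip x).

(*  - sigma permutes cyclically the darts at each vertex of G';             *)
(*  - G' is embedded in the sphere: Euler's formula V - E + F = 2 holds     *)
(*    on every connected component (equivalently sum = 2 * #components).    *)
Definition is_BTB (W B E L : finType) (wv : E -> W) (bv : E -> B) (lw : L -> W)
  (sigma : {perm dart E L}) : Prop :=
  [/\ forall b : B, #|[set e | bv e == b]| = 3%N,
      forall d d' : dart E L,
        fconnect sigma d d' = (dvert wv bv lw d == dvert wv bv lw d')
    & (fcard sigma predT + fcard (dface sigma) predT
        = #|E| + #|L| + 2 * n_comp (dadj sigma) predT)%N ].

Definition boundary_white (W E L : finType) (lw : L -> W) : pred W :=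
  fun w => [exists l, lw l == w].

(* Zig-zag paths.  A state (e, true) means traversing e from its black end *)
(* towards its white end, (e, false) from white towards black.           *)
(* Arriving at a white vertex the path turns maximally left, i.e. leaves    *)
(* along the clockwise-next dart (sigma^-1); if that dart is a leg the path *)
(* has reached the boundary and stops.  Arriving at a black vertex it turns *)
(* maximally right, i.e. leaves along the counterclockwise-next dart.       *)

Definition zz_step (E L : finType) (sigma : {perm dart E L}) (s : E * bool)
  : option (E * bool) :=
  match s with
  | (e, true) =>
      match (sigma^-1)%g (inl (e, true)) with
      | inl (f, true) => Some (f, false)
      | _ => None
      end
  | (e, false) =>
      match sigma (inl (e, false)) with
      | inl (f, false) => Some (f, true)
      | _ => None
      end
  end.

Definition zz_iter (E L : finType) (sigma : {perm dart E L}) (n : nat)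
  (s : E * bool) : option (E * bool) :=
  iter n (fun o => obind (zz_step sigma) o) (Some s).

Definition zz_reach (E L : finType) (sigma : {perm dart E L}) (s t : E * bool) :=
  exists n, zz_iter sigma n s = Some t.

(*  (1) no zig-zag path is closed;                                          *)
(*  (2) no zig-zag path traverses an edge twice (repeating a state is       *)
(*      excluded by (1); here: not in both directions);                     *)
(*  (3) no two zig-zag paths both traverse distinct edges e1 then e2.       *)
Definition minimal_BTB (E L : finType) (sigma : {perm dart E L}) : Prop :=
  [/\ forall s n, zz_iter sigma n.+1 s <> Some s,
      forall e : E, ~ zz_reach sigma (e, true) (e, false)
                 /\ ~ zz_reach sigma (e, false) (e, true)
    & forall s1 t1 s2 t2 : E * bool,
        s1.1 = s2.1 -> t1.1 = t2.1 -> s1.1 <> t1.1 ->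
        zz_reach sigma s1 t1 -> zz_reach sigma s2 t2 -> s1 = s2 ].

(* Projective geometry over C.  A point of CP^n is represented by a nonzero *)
(* row vector of 'rV[C]_n.+1; projective subspaces by row spaces (%MS).    *)

Definition proj_eq (n : nat) (u v : 'rV[C]_n) : bool := (u == v)%MS.

Definition line_b (W B E : finType) (wv : E -> W) (bv : E -> B) (n : nat)
  (T : W -> 'rV[C]_n.+1) (b : B) : 'M[C]_n.+1 :=
  (\sum_(e | bv e == b) <<T (wv e)>>)%MS.

Definition is_TCD (W B E : finType) (wv : E -> W) (bv : E -> B) (n : nat)
  (T : W -> 'rV[C]_n.+1) : Prop :=
  (forall w, T w != 0) /\
  (forall b : B,
     (forall e e' : E, bv e = b -> bv e' = b -> e != e' ->
        ~~ proj_eq (T (wv e)) (T (wv e')))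
     /\ (\rank (line_b wv bv T b) <= 2)%N).

Definition tcd_rank (W : finType) (n : nat) (T : W -> 'rV[C]_n.+1) : nat :=
  (\rank (\sum_(w : W) <<T w>>)%MS).-1.

(* Central projection from U onto the complementary subspace V:            *)
(* P |-> V /\ span(U, P), i.e. the linear projection onto V along U.       *)
Definition central_proj (n : nat) (U V : 'M[C]_n.+1) (x : 'rV[C]_n.+1)
  : 'rV[C]_n.+1 := x *m proj_mx V U.

Definition admissible (W B E : finType) (wv : E -> W) (bv : E -> B) (n : nat)
  (T : W -> 'rV[C]_n.+1) (U : 'M[C]_n.+1) : Prop :=
  (forall w, ~~ (T w <= U)%MS) /\
  (forall b : B, \rank (U :&: line_b wv bv T b)%MS = 0%N).

(* Main.v *)
Require Import Defs.
From HB Require Import structures.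
From mathcomp Require Import all_boot all_order all_algebra all_fingroup.
From mathcomp Require Import complex.
From mathcomp Require Import reals Rstruct.
Set Implicit Arguments. Unset Strict Implicit. Unset Printing Implicit Defensive.
From mathcomp Require Import zify.
Import Order.TTheory GRing.Theory Num.Theory.
Local Open Scope ring_scope.

Lemma exists_dep (E : finType) k (S : {set E}) (v : E -> 'rV[C]_k) :
  (\rank (\sum_(e in S) <<v e>>)%MS < #|S|)%N ->
  exists g : E -> C, (\sum_(e in S) g e *: v e = 0) /\ exists2 e, e \in S & g e != 0.
Proof.
move=> hr.
pose Mb : 'M[C]_(#|S|, k) := \matrix_(i < #|S|) v (enum_val i).
have sM : (Mb <= \sum_(e in S) <<v e>>)%MS.
  apply/row_subP => i; rewrite rowK; apply: (sumsmx_sup (enum_val i)).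
    exact: enum_valP.
  by rewrite genmxE.
have rK : (0 < \rank (kermx Mb))%N.
  rewrite mxrank_ker subn_gt0; exact: leq_ltn_trans (mxrankS sM) hr.
have [i0 ni0] : exists i0, row i0 (kermx Mb) != 0.
  apply/existsP; apply: contraLR rK; rewrite negb_exists => /forallP H.
  rewrite -leqNgt leqn0 mxrank_eq0; apply/eqP/row_matrixP => i.
  by rewrite row0; apply/eqP; move/negPn: (H i).
set kk := row i0 (kermx Mb) in ni0.
have kM : kk *m Mb = 0 by apply/sub_kermxP; exact: row_sub.
have [j nj] : exists j, kk 0 j != 0.
  apply/existsP; apply: contraR ni0; rewrite negb_exists => /forallP H.
  apply/eqP.
  apply/rowP => j.
  rewrite [RHS]mxE; apply/eqP; exact/negPn/H.
exists (fun e => \sum_i kk 0 i * (enum_val i == e)%:R); split.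
  rewrite -[RHS]kM mulmx_sum_row.
  under eq_bigr do rewrite scaler_suml.
  rewrite exchange_big /=; apply: eq_bigr => i _.
  rewrite (bigD1 (enum_val i)) ?enum_valP //= eqxx mulr1 big1 ?addr0 ?rowK //.
  by move=> e /andP[_ ne]; rewrite eq_sym (negbTE ne) mulr0 scale0r.
exists (enum_val j); first exact: enum_valP.
rewrite (bigD1 j) //= eqxx mulr1 big1 ?addr0 //.
by move=> i /negbTE hij; rewrite (inj_eq enum_val_inj) hij mulr0.
Qed.

Lemma rank_sum_gen_le (E : finType) k (A : {set E}) (u : E -> 'rV[C]_k) :
  (\rank (\sum_(e in A) <<u e>>)%MS <= #|A|)%N.
Proof.
rewrite -sum1_card; elim/big_rec2: _ => [|e X n _ le]; first by rewrite mxrank0.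
have [le1 _] := mxrank_adds_leqif <<u e>>%MS X.
apply: leq_trans le1 (leq_add _ le).
by rewrite mxrank_gen rank_leq_row.
Qed.

Lemma rank_dep (E : finType) k (S : {set E}) (u : E -> 'rV[C]_k) (g : E -> C) e0 :
  \sum_(e in S) g e *: u e = 0 -> e0 \in S -> g e0 != 0 ->
  (\rank (\sum_(e in S) <<u e>>)%MS <= #|S|.-1)%N.
Proof.
move=> H e0S ng.
have sub : (\sum_(e in S) <<u e>> <= \sum_(e in S :\ e0) <<u e>>)%MS.
  apply/sumsmx_subP => e eS; case: (eqVneq e e0) => [->|ne]; last first.
    by apply: (sumsmx_sup e); rewrite ?in_setD1 ?ne ?eS.
  rewrite genmxE.
  rewrite (bigD1 e0) //= in H.
  have -> : u e0 = - (g e0)^-1 *: \sum_(e in S :\ e0) g e *: u e.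
    rewrite (eq_bigl (fun e => (e \in S) && (e != e0))); last first.
      by move=> x; rewrite in_setD1 andbC.
    move/eqP: H; rewrite addr_eq0 => /eqP H.
    by rewrite scaleNr -scalerN -H scalerA mulVf // scale1r.
  apply: scalemx_sub; apply: summx_sub => x xS; apply: scalemx_sub.
  by apply: (sumsmx_sup x) => //; rewrite genmxE.
apply: leq_trans (mxrankS sub) _.
apply: leq_trans (rank_sum_gen_le _ _) _.
by rewrite (cardsD1 e0 S) e0S.
Qed.

Lemma rank_two (E : finType) k (S : {set E}) (u : E -> 'rV[C]_k) e1 e2 :
  e1 \in S -> e2 \in S -> u e1 != 0 -> u e2 != 0 -> ~~ (u e1 == u e2)%MS ->
  (1 < \rank (\sum_(e in S) <<u e>>)%MS)%N.
Proof.
move=> s1 s2 h1 h2 hne.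
have r1 : \rank (u e1) = 1%N by rewrite rank_rV h1.
have r2 : \rank (u e2) = 1%N by rewrite rank_rV h2.
have sub : ((u e1 + u e2)%MS <= \sum_(e in S) <<u e>>)%MS.
  by rewrite addsmx_sub; apply/andP; split; [apply: (sumsmx_sup e1) | apply: (sumsmx_sup e2)];
    rewrite ?genmxE.
apply: contraR hne; rewrite -leqNgt => hle.
have hle' : (\rank (u e1 + u e2)%MS <= 1)%N := leq_trans (mxrankS sub) hle.
have H1 : ((u e1 + u e2)%MS <= u e1)%MS.
  rewrite -(mxrank_leqif_sup (addsmxSl (u e1) (u e2))).2 r1 eqn_leq hle' /=.
  by rewrite andbT; have := mxrankS (addsmxSl (u e1) (u e2)); rewrite r1.
have H2 : ((u e1 + u e2)%MS <= u e2)%MS.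
  rewrite -(mxrank_leqif_sup (addsmxSr (u e1) (u e2))).2 r2 eqn_leq hle' /=.
  by rewrite andbT; have := mxrankS (addsmxSr (u e1) (u e2)); rewrite r2.
apply/andP; split.
  exact: submx_trans (addsmxSl _ _) H2.
exact: submx_trans (addsmxSr _ _) H1.
Qed.

Definition rowF (W : finType) q (F : 'M[C]_(q, #|W|)) (w : W) : 'rV[C]_q :=
  row (enum_rank w) F^T.

Lemma rowFE (W : finType) q (F : 'M[C]_(q, #|W|)) w j :
  rowF F w 0 j = F j (enum_rank w).
Proof. by rewrite !mxE. Qed.

Lemma rank_rowF (W : finType) q (F : 'M[C]_(q, #|W|)) :
  \rank (\sum_(w : W) <<rowF F w>>)%MS = \rank F.
Proof.
rewrite -[RHS]mxrank_tr; apply/eqP; rewrite eqn_leq; apply/andP; split.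
  apply: mxrankS; apply/sumsmx_subP => w _; rewrite genmxE; exact: row_sub.
apply: mxrankS; apply/row_subP => i; apply: (sumsmx_sup (enum_val i)) => //.
rewrite genmxE /rowF enum_valK; exact: submx_refl.
Qed.

Definition Phi (W B E : finType) (wv : E -> W) (bv : E -> B) (gam : B -> E -> C)
  : 'M[C]_(#|W|, #|B|) :=
  \matrix_(i, j) \sum_(e in [set e | bv e == enum_val j])
      gam (enum_val j) e * (enum_val i == wv e)%:R.

Lemma PhiE (W B E : finType) (wv : E -> W) (bv : E -> B) (gam : B -> E -> C)
  q (F : 'M[C]_(q, #|W|)) j jb :
  (F *m Phi wv bv gam) j jb =
  \sum_(e in [set e | bv e == enum_val jb]) gam (enum_val jb) e * F j (enum_rank (wv e)).
Proof.
rewrite mxE.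
under eq_bigr do rewrite mxE mulr_sumr.
rewrite [LHS]exchange_big /=.
apply: eq_bigr => e _.
rewrite (bigD1 (enum_rank (wv e))) //= enum_rankK eqxx mulr1.
rewrite big1 ?addr0.
  by rewrite mulrC.
move=> i ne; case: eqP => [h|]; last by rewrite mulr0 mulr0.
by move: ne; rewrite -h enum_valK eqxx.
Qed.

Lemma Phi_rel (W B E : finType) (wv : E -> W) (bv : E -> B) (gam : B -> E -> C)
  q (F : 'M[C]_(q, #|W|)) :
  F *m Phi wv bv gam = 0 -> forall b,
  \sum_(e in [set e | bv e == b]) gam b e *: rowF F (wv e) = 0.
Proof.
move=> H b; apply/rowP => j; rewrite summxE [RHS]mxE.
have := congr1 (fun M : 'M[C]_(q, #|B|) => M j (enum_rank b)) H.
rewrite PhiE enum_rankK [RHS]mxE => h; rewrite -[RHS]h.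
apply: eq_bigr => e _; rewrite mxE rowFE; reflexivity.
Qed.

Unset Implicit Arguments.
Set Strict Implicit.

Theorem proposition4p9
  (W B E L : finType) (wv : E -> W) (bv : E -> B) (lw : L -> W)
  (sigma : {perm dart E L}) (r d : nat) :
  is_BTB wv bv lw sigma -> minimal_BTB sigma ->
  (1 <= r)%N -> (r < d)%N -> (d + #|B| + 1 <= #|W|)%N ->
  forall T : W -> 'rV[C]_r.+1,
    is_TCD wv bv T -> tcd_rank T = r ->
    exists (That : W -> 'rV[C]_d.+1) (U V : 'M[C]_d.+1)
           (P : 'M[C]_(d.+1, r.+1)),
      [/\ is_TCD wv bv That /\ tcd_rank That = d,
          [/\ \rank U = (d - r)%N, \rank V = r.+1,
               \rank (U :&: V)%MS = 0%N & (U + V == 1%:M)%MS],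
          admissible wv bv That U,
          \rank (V *m P) = r.+1
        & forall w, proj_eq (T w) (central_proj U V (That w) *m P)].
Proof.
move=> [Hdeg _ _] _ hr1 hrd hcard T [Tnz Tb] hrank.
have dE : d = (r + (d - r))%N by rewrite subnKC // ltnW.
move: (d - r)%N dE => m dE; subst d.
pose Sb b := [set e | bv e == b].
have lineE : forall k (X : W -> 'rV[C]_k.+1) b,
    line_b wv bv X b = (\sum_(e in Sb b) <<X (wv e)>>)%MS.
  by move=> k X b; apply: eq_bigl => e; rewrite inE.
have card3 : forall b, #|Sb b| = 3%N := Hdeg.
have : forall b, exists g : E -> C, (\sum_(e in Sb b) g e *: T (wv e) = 0) /\
          exists2 e, e \in Sb b & g e != 0.
  move=> b; apply: (exists_dep (v := fun e => T (wv e))).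
  rewrite card3 -lineE; case: (Tb b) => _ h; exact: leq_ltn_trans h _.
case/fin_all_exists => gam Hgam.
pose Ph := Phi wv bv gam.
pose Tt : 'M[C]_(r.+1, #|W|) := \matrix_(j, i) T (enum_val i) 0 j.
have TtE : forall w, rowF Tt w = T w.
  by move=> w; apply/rowP => j; rewrite rowFE mxE enum_rankK.
have TtPh : Tt *m Ph = 0.
  apply/matrixP => j jb; rewrite PhiE [RHS]mxE.
  have := congr1 (fun M : 'rV[C]_r.+1 => M 0 j) (proj1 (Hgam (enum_val jb))).
  rewrite summxE [RHS]mxE => h; rewrite -[RHS]h.
  apply: eq_bigr => e _; rewrite !mxE enum_rankK mulrC; reflexivity.
have rT : \rank (\sum_(w : W) <<T w>>)%MS = r.+1.
  move: hrank; rewrite /tcd_rank.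
  case: (\rank _) => [|k] /= hk; last by rewrite hk.
  by move: hr1; rewrite -hk.
have rTt : \rank Tt = r.+1.
  rewrite -rank_rowF -[RHS]rT; congr (\rank _); apply: eq_bigr => w _; rewrite TtE; reflexivity.
pose K := kermx Ph.
have TtK : (Tt <= K)%MS by rewrite sub_kermx TtPh eqxx.
have rK : (r + m + 1 <= \rank K)%N.
  rewrite mxrank_ker.
  have := rank_leq_col Ph.
  move: hcard; set a := \rank Ph; set nW := #|W|; set nB := #|B| => h1 h2.
  lia.
pose D := (K :\: Tt)%MS.
have rD : (m <= \rank D)%N.
  have := mxrank_cap_compl K Tt.
  have /capmx_idPr eKT := TtK.
  rewrite eKT rTt -/D => h; lia.
pose Z : 'M[C]_(m, #|W|) := (pid_mx m : 'M_(m, \rank D)) *m row_base D.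
have rZ : \rank Z = m.
  by rewrite /Z mxrankMfree ?row_base_free // rank_pid_mx.
have ZD : (Z <= D)%MS by rewrite /Z (submx_trans (submxMl _ _)) // eq_row_base.
have ZK : (Z <= K)%MS := submx_trans ZD (diffmxSl _ _).
have ZPh : Z *m Ph = 0 by apply/eqP; rewrite -sub_kermx.
pose F := col_mx Tt Z.
have FPh : F *m Ph = 0 by rewrite /F mul_col_mx TtPh ZPh col_mx0.
have rF : \rank F = (r.+1 + m)%N.
  have := mxrank_sum_cap Tt Z; rewrite addsmxE -/F rTt rZ.
  have c0 : \rank (Tt :&: Z)%MS = 0%N.
    apply/eqP; rewrite mxrank_eq0 -submx0 -(capmx_diff K Tt) sub_capmx.
    by rewrite capmxSl andbT (submx_trans (capmxSr _ _) ZD).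
  rewrite c0 addn0; exact.
pose That := rowF F.
have ThatE : forall w, That w = row_mx (T w) (rowF Z w).
  move=> w; rewrite /That /rowF /F tr_col_mx row_row_mx.
  by rewrite -/(rowF Tt w) TtE.
pose P : 'M[C]_(r.+1 + m, r.+1) := pid_mx r.+1.
have PE : P = col_mx 1%:M 0 by rewrite /P pid_mx_col.
have rowP' : forall (a : 'rV[C]_r.+1) (z : 'rV[C]_m), row_mx a z *m P = a.
  by move=> a z; rewrite PE mul_row_col mulmx1 mulmx0 addr0.
have ThatP : forall w, That w *m P = T w.
  by move=> w; rewrite ThatE rowP'.
pose V : 'M[C]_(r.+1 + m) := pid_mx r.+1.
pose U : 'M[C]_(r.+1 + m) := copid_mx r.+1.
have UP : U *m P = 0 by rewrite /U /P mul_copid_mx_pid // leq_addr.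
have UK : (U <= kermx P)%MS by rewrite sub_kermx UP eqxx.
have rU : \rank U = m by rewrite /U rank_copid_mx ?leq_addr // addKn.
have rV : \rank V = r.+1 by rewrite /V rank_pid_mx // leq_addr.
have UV1 : (U + V == 1%:M)%MS.
  apply/andP; split; first exact: submx1.
  have -> : (1%:M : 'M[C]_(r.+1 + m)) = U + V by rewrite /U /copid_mx subrK.
  by apply: addmx_sub_adds; apply: submx_refl.
have rUV : \rank (U :&: V)%MS = 0%N.
  have := mxrank_sum_cap U V; rewrite (eqmxP UV1) mxrank1 rU rV => h; lia.
have VU0 : (V :&: U = 0)%MS by apply/eqP; rewrite -mxrank_eq0 capmxC rUV.
have projE : forall w, central_proj U V (That w) = row_mx (T w) 0.
  move=> w; rewrite /central_proj ThatE.
  have -> : row_mx (T w) (rowF Z w) = row_mx (T w) 0 + row_mx 0 (rowF Z w).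
    by rewrite add_row_mx addr0 add0r.
  rewrite mulmxDl proj_mx_id // ?proj_mx_0 ?addr0 //.
    have <- : row_mx 0 (rowF Z w) *m U = row_mx 0 (rowF Z w).
      rewrite /U /copid_mx mulmxBr mulmx1 pid_mx_block mul_row_block.
      by rewrite !mulmx0 !mul0mx !addr0 row_mx0 subr0.
    exact: submxMl.
  have <- : row_mx (T w) 0 *m V = row_mx (T w) 0.
    rewrite /V pid_mx_block mul_row_block.
    rewrite !mulmx0 ?mul0mx mulmx1 !addr0.
    reflexivity.
  exact: submxMl.
have TP : forall w, central_proj U V (That w) *m P = T w.
  by move=> w; rewrite projE rowP'.
have Lh_le2 : forall b, (\rank (line_b wv bv That b) <= 2)%N.
  move=> b; rewrite lineE.
  have [e0 e0S ne0] := (Hgam b).2.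
  apply: leq_trans (rank_dep (u := fun e => That (wv e)) (Phi_rel FPh b) e0S ne0) _.
  by rewrite card3.
have LT_ge2 : forall b, (1 < \rank (line_b wv bv T b))%N.
  move=> b.
  have /card_gt1P [e1 [e2 [h1 h2 h12]]] : (1 < #|Sb b|)%N by rewrite card3.
  have hne : ~~ proj_eq (T (wv e1)) (T (wv e2)).
    move: (h1) (h2); rewrite !inE => /eqP h1' /eqP h2'.
    exact: (Tb b).1 e1 e2 h1' h2' h12.
  rewrite lineE; exact: (rank_two (u := fun e => T (wv e))) h1 h2 (Tnz _) (Tnz _) hne.
have VP : \rank (V *m P) = r.+1.
  rewrite /V /P mul_pid_mx minnn.
  rewrite (minn_idPr (leq_addr m r.+1)) rank_pid_mx //; exact: leq_addr.
exists That, U, V, P; split.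
- split; last by rewrite /tcd_rank rank_rowF rF addSn.
  split.
    move=> w; apply/negP => /eqP h; move: (Tnz w).
    by rewrite -ThatP h mul0mx eqxx.
  move=> b; split; last exact: Lh_le2.
  move=> e e' he he' ne; apply: contra ((Tb b).1 e e' he he' ne) => /andP[s1 s2].
  by rewrite /proj_eq -!ThatP; apply/andP; split; apply: submxMr.
- by split.
- split.
    move=> w; apply/negP => h; have := submxMr P h.
    rewrite UP ThatP => /submx0null h0; by move: (Tnz w); rewrite h0 eqxx.
  move=> b; set Lh := line_b wv bv That b.
  have := mxrank_mul_ker Lh P.
  have ge : (1 < \rank (Lh *m P))%N.
    apply: leq_trans (LT_ge2 b) (mxrankS _).
    rewrite lineE; apply/sumsmx_subP => e he; rewrite genmxE -ThatP.
    apply: submxMr; rewrite /Lh lineE; apply: (sumsmx_sup e) => //.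
    by rewrite genmxE.
  have := Lh_le2 b; rewrite -/Lh => h1 h2.
  rewrite -h2 in h1.
  have h3 : (\rank (Lh :&: kermx P)%MS <= 0)%N.
    move: h1 ge; set x := \rank (Lh *m P); set y := \rank _; lia.
  apply/eqP; rewrite -leqn0; apply: leq_trans h3; apply: mxrankS.
  by rewrite sub_capmx capmxSr (submx_trans (capmxSl _ _) UK).
- exact: VP.
- move=> w; rewrite TP /proj_eq; apply/andP; split; exact: submx_refl.
Qed.
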